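(* Let $p$ be a prime and let $K$ be a spherically complete non-Archimedean field whose residue field $k$ has characteristic $p$. Assume that (i) the value group $\Gamma=|K^\times|$ is $p$-divisible, and (ii) the residue field $k$ is perfect. Then $K$ is a perfectoid field.
   Context: A non-Archimedean field is a field complete with respect to a nontrivial rank-one (real-valued) non-Archimedean absolute value $|\cdot|$. It is spherically complete if every decreasing sequence of closed balls has nonempty intersection. A perfectoid field is a non-Archimedean field $K$ with non-discrete value group, residue characteristic $p$, such that the Frobenius $x\mapsto x^p$ is surjective on $\mathcal{O}_K/p$, where $\mathcal{O}_K=\{x:|x|\le1\}$. *)

(* Defs.v *)
From HB Require Import structures.
From mathcomp Require Import all_boot all_order all_algebra.
From mathcomp Require Import reals.
Set Implicit Arguments. Unset Strict Implicit. Unset Printing Implicit Defensive.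
Import Order.TTheory GRing.Theory Num.Theory.
Local Open Scope ring_scope.

Definition nonarch_abs (K : fieldType) (R : realType) (abs : K -> R) : Prop :=
  [/\ forall x, 0 <= abs x,
      forall x, abs x = 0 <-> x = 0,
      forall x y, abs (x * y) = abs x * abs y
    & forall x y, abs (x + y) <= Num.max (abs x) (abs y)].

Definition nontrivial_abs (K : fieldType) (R : realType) (abs : K -> R) : Prop :=
  exists x : K, x != 0 /\ abs x != 1.

Definition abs_cauchy (K : fieldType) (R : realType) (abs : K -> R)
  (u : nat -> K) : Prop :=
  forall e : R, 0 < e -> exists N : nat, forall m n : nat,
    (N <= m)%N -> (N <= n)%N -> abs (u m - u n) < e.

Definition abs_converges_to (K : fieldType) (R : realType) (abs : K -> R)
  (u : nat -> K) (l : K) : Prop :=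
  forall e : R, 0 < e -> exists N : nat, forall n : nat,
    (N <= n)%N -> abs (u n - l) < e.

Definition abs_complete (K : fieldType) (R : realType) (abs : K -> R) : Prop :=
  forall u : nat -> K, abs_cauchy abs u -> exists l : K, abs_converges_to abs u l.

Definition nonarch_field (K : fieldType) (R : realType) (abs : K -> R) : Prop :=
  [/\ nonarch_abs abs, nontrivial_abs abs & abs_complete abs].

Definition cball (K : fieldType) (R : realType) (abs : K -> R) (a : K) (r : R)
  : pred K := fun x => abs (x - a) <= r.

Definition spherically_complete (K : fieldType) (R : realType) (abs : K -> R)
  : Prop :=
  forall (a : nat -> K) (r : nat -> R),
    (forall n, 0 < r n) ->
    (forall n x, cball abs (a n.+1) (r n.+1) x -> cball abs (a n) (r n) x) ->
    exists x : K, forall n, cball abs (a n) (r n) x.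

(* the residue field k = O_K / m_K has characteristic p, i.e. p*1 lies in m_K *)
Definition residue_char (K : fieldType) (R : realType) (abs : K -> R) (p : nat)
  : Prop := abs (p%:R : K) < 1.

(* residue field is perfect: Frobenius is surjective on O_K / m_K *)
Definition residue_perfect (K : fieldType) (R : realType) (abs : K -> R) (p : nat)
  : Prop :=
  forall x : K, abs x <= 1 -> exists y : K, abs y <= 1 /\ abs (y ^+ p - x) < 1.

Definition value_group_pdivisible (K : fieldType) (R : realType) (abs : K -> R)
  (p : nat) : Prop :=
  forall x : K, x != 0 -> exists y : K, y != 0 /\ (abs y) ^+ p = abs x.

Definition value_group_nondiscrete (K : fieldType) (R : realType) (abs : K -> R)
  : Prop :=
  forall e : R, 0 < e -> exists x : K, x != 0 /\ 1 < abs x < 1 + e.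

(* Frobenius surjective on O_K / p O_K:  for x in O_K there is y in O_K with
   y^p - x in p O_K, i.e. |y^p - x| <= |p| *)
Definition frobenius_surj_mod_p (K : fieldType) (R : realType) (abs : K -> R)
  (p : nat) : Prop :=
  forall x : K, abs x <= 1 ->
    exists y : K, abs y <= 1 /\ abs (y ^+ p - x) <= abs (p%:R : K).

Definition perfectoid (K : fieldType) (R : realType) (abs : K -> R) (p : nat)
  : Prop :=
  [/\ prime p, nonarch_field abs, value_group_nondiscrete abs,
      residue_char abs p & frobenius_surj_mod_p abs p].

(* Main.v *)
Require Import Defs.
From HB Require Import structures.
From mathcomp Require Import all_boot all_order all_algebra.
From mathcomp Require Import reals.
From mathcomp Require Import boolp classical_sets ring lra.
Import Order.TTheory GRing.Theory Num.Theory.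
Local Open Scope ring_scope.

Lemma na_abs1 {K : fieldType} {R : realType} {abs : K -> R} :
  nonarch_abs abs -> abs 1 = 1.
Proof.
case=> H0 H1 HM _.
have h := HM 1 1; rewrite mulr1 in h.
have nz : abs 1 != 0 by apply/eqP => /H1 /eqP; rewrite oner_eq0.
by apply: (mulfI nz); rewrite mulr1 -h.
Qed.

Lemma na_absN {K : fieldType} {R : realType} {abs : K -> R} x :
  nonarch_abs abs -> abs (- x) = abs x.
Proof.
move=> H; have h1 := na_abs1 H; case: H => H0 H1 HM _.
have hm1 : abs (-1) = 1.
  have := HM (-1) (-1); rewrite mulrNN mulr1 h1 => h.
  have : abs (-1) ^+ 2 == 1 by rewrite expr2 -h.
  rewrite sqrf_eq1 => /orP [/eqP //| /eqP e].
  by have := H0 (-1); rewrite e ler0N1.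
by rewrite -mulN1r HM hm1 mul1r.
Qed.

Lemma na_absB {K : fieldType} {R : realType} {abs : K -> R} x y z :
  nonarch_abs abs -> abs (x - z) <= Num.max (abs (x - y)) (abs (y - z)).
Proof.
move=> H; case: (H) => _ _ _ HT.
by have := HT (x - y) (y - z); rewrite addrA subrK.
Qed.

Lemma na_absD {K : fieldType} {R : realType} {abs : K -> R} x y :
  nonarch_abs abs -> abs (x + y) <= Num.max (abs x) (abs y).
Proof. by case=> _ _ _ HT. Qed.

Lemma na_absX {K : fieldType} {R : realType} {abs : K -> R} x n :
  nonarch_abs abs -> abs (x ^+ n) = abs x ^+ n.
Proof.
move=> H; have h1 := na_abs1 H; case: H => _ _ HM _.
by elim: n => [|n IH]; rewrite ?expr0 // !exprS HM IH.
Qed.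

Lemma na_absMn {K : fieldType} {R : realType} {abs : K -> R} x n :
  nonarch_abs abs -> abs (x *+ n) <= abs x.
Proof.
move=> H; case: (H) => H0 H1 _ HT.
elim: n => [|n IH]; first by rewrite mulr0n; have /H1 -> : (0:K) = 0 by []; exact: H0.
rewrite mulrS; apply: le_trans (HT _ _) _; rewrite ge_max lexx /=; exact: IH.
Qed.

Lemma na_absV {K : fieldType} {R : realType} {abs : K -> R} x :
  nonarch_abs abs -> x != 0 -> abs (x^-1) = (abs x)^-1.
Proof.
move=> H nx; have h1 := na_abs1 H; case: H => _ H1 HM _.
have ax : abs x != 0 by apply/eqP => /H1 /eqP; rewrite (negbTE nx).
have := HM x x^-1; rewrite mulfV // h1 => /esym h.
by rewrite -[LHS]mul1r -(mulVf ax) -mulrA h mulr1.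
Qed.

Lemma na_le1_sub {K : fieldType} {R : realType} {abs : K -> R} a b :
  nonarch_abs abs -> abs a <= 1 -> abs b <= 1 -> abs (a - b) <= 1.
Proof.
move=> H ha hb; apply: le_trans (na_absD _ _ H) _.
by rewrite ge_max ha na_absN.
Qed.


Lemma na_binom {K : fieldType} {R : realType} {abs : K -> R} (p : nat) a b :
  prime p -> nonarch_abs abs -> abs a <= 1 -> abs b <= 1 ->
  abs ((a + b) ^+ p - a ^+ p - b ^+ p) <= abs (p%:R : K).
Proof.
move=> pp H ha hb; have h1 := na_abs1 H; case: (H) => H0 H1 HM HT.
have p0 := prime_gt0 pp; move: pp; case: p p0 => // q _ pp.
rewrite exprDn big_ord_recl big_ord_recr /=.
rewrite subn0 expr0 mulr1 bin0 mulr1n subnn expr0 mul1r binn mulr1n.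
set M := \sum_(i < q) _.
have -> : a ^+ q.+1 + (M + b ^+ q.+1) - a ^+ q.+1 - b ^+ q.+1 = M by ring.
rewrite /M; apply: (big_ind (fun z => abs z <= abs (q.+1%:R : K))).
- by have /H1 -> : (0:K) = 0 by []; exact: H0.
- by move=> x y hx hy; apply: le_trans (HT x y) _; rewrite ge_max hx hy.
move=> i _.
have : (q.+1 %| 'C(q.+1, bump 0 i))%N.
  by apply: prime_dvd_bin => //; rewrite /bump /= add1n ltnS ltn_ord.
case/dvdnP => k ->; rewrite mulrnA -(mulr_natr (_ *+ k)) HM.
apply: ler_piMl => //.
apply: le_trans (na_absMn _ _ H) _.
rewrite HM (na_absX a _ H) (na_absX b _ H); apply: mulr_ile1; rewrite ?exprn_ge0 ?exprn_ile1 //.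
Qed.

Lemma na_powB1 {K : fieldType} {R : realType} {abs : K -> R} (p : nat) a b :
  prime p -> nonarch_abs abs -> abs a <= 1 -> abs b <= 1 ->
  abs (a ^+ p - b ^+ p) <= Num.max (abs (a - b) ^+ p) (abs (p%:R : K)).
Proof.
move=> pp H ha hb.
have -> : a ^+ p - b ^+ p = (a - b) ^+ p + ((b + (a - b)) ^+ p - b ^+ p - (a - b) ^+ p).
  by rewrite [b + _]addrC subrK [RHS]addrC subrK.
apply: le_trans (na_absD _ _ H) _.
rewrite ge_max le_max (na_absX _ _ H) lexx /= le_max.
by rewrite (na_binom _ _ _ pp H hb (na_le1_sub _ _ H ha hb)) orbT.
Qed.

Lemma na_powB2 {K : fieldType} {R : realType} {abs : K -> R} (p : nat) a b :
  prime p -> nonarch_abs abs -> abs a <= 1 -> abs b <= 1 ->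
  abs (a - b) ^+ p <= Num.max (abs (a ^+ p - b ^+ p)) (abs (p%:R : K)).
Proof.
move=> pp H ha hb.
rewrite -(na_absX _ _ H).
have -> : (a - b) ^+ p = (a ^+ p - b ^+ p) + - ((b + (a - b)) ^+ p - b ^+ p - (a - b) ^+ p).
  by rewrite [b + _]addrC subrK opprB [RHS]addrC subrK.
apply: le_trans (na_absD _ _ H) _.
rewrite ge_max le_max lexx /= le_max na_absN //.
by rewrite (na_binom _ _ _ pp H hb (na_le1_sub _ _ H ha hb)) orbT.
Qed.


Lemma nondiscrete {K : fieldType} {R : realType} {abs : K -> R} (p : nat) :
  prime p -> nonarch_field abs -> value_group_pdivisible abs p ->
  value_group_nondiscrete abs.
Proof.
move=> pp [H [x0 [nx0 ax0]] _] Hdiv e e0.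
have h1 := na_abs1 H; case: (H) => H0 H1 HM HT.
have pos : forall x, x != 0 -> 0 < abs x.
  move=> x nx; rewrite lt_def H0 andbT; apply/eqP => /H1 /eqP; by rewrite (negbTE nx).
have [a [na a1]] : exists a, a != 0 /\ 1 < abs a.
  case: (ltgtP (abs x0) 1) => [lt|gt|eq].
  - exists x0^-1; split; first by rewrite invr_eq0.
    by rewrite na_absV // invf_gt1 // pos.
  - by exists x0.
  - by rewrite eq eqxx in ax0.
have roots : forall n, exists b, b != 0 /\ abs b ^+ (p ^ n) = abs a.
  elim=> [|n [b [nb hb]]]; first by exists a; rewrite expn0 expr1.
  have [c [nc hc]] := Hdiv b nb; exists c; split => //.
  by rewrite expnS exprM hc.
have bern : forall m : nat, 1 + m%:R * e <= (1 + e) ^+ m.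
  elim=> [|m IH]; first by rewrite mul0r addr0 expr0.
  have m0 : 0 <= m%:R :> R by [].
  rewrite exprS -addn1 natrD; nra.
have ae : 0 <= abs a / e by rewrite divr_ge0 // ltW.
set k := Num.Def.archi_bound (abs a / e).
have hk := archi_boundP ae; rewrite -/k in hk.
have ake : abs a < k%:R * e by rewrite -ltr_pdivrMr.
set m := (p ^ k)%N.
have km : (k < m)%N by apply: ltn_expl; exact: prime_gt1.
have m0 : (0 < m)%N by apply: leq_ltn_trans km.
have [b [nb hb]] := roots k; rewrite -/m in hb.
exists b; split => //; apply/andP; split.
- rewrite ltNge; apply/negP => hb1.
  have : abs b ^+ m <= 1 by apply: exprn_ile1.
  by rewrite hb leNgt a1.
- rewrite ltNge; apply/negP => hb1.
  have : (1 + e) ^+ m <= abs b ^+ m.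
    by rewrite ler_pXn2r // nnegrE // ltW // ltr_pwDr.
  rewrite hb => h2; have := le_trans (bern m) h2.
  have : k%:R <= m%:R :> R by rewrite ler_nat ltnW.
  move=> hkm hh; nra.
Qed.


Lemma frob {K : fieldType} {R : realType} {abs : K -> R} (p : nat) :
  prime p -> nonarch_abs abs -> spherically_complete abs ->
  value_group_pdivisible abs p -> residue_perfect abs p ->
  frobenius_surj_mod_p abs p.
Proof.
move=> pp H Hsc Hdiv Hperf x hx.
have h1 := na_abs1 H; case: (H) => H0 H1 HM HT.
have abs0 : abs 0 = 0 by apply/H1.
pose P := abs (p%:R : K).
pose f := fun y => abs (y ^+ p - x).
have fsym : forall y, abs (x - y ^+ p) = f y by move=> y; rewrite /f -opprB na_absN.
apply: contrapT => Hno.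
have Hbig : forall y, abs y <= 1 -> P < f y.
  move=> y hy; rewrite ltNge; apply/negP => hle; apply: Hno; by exists y.
have p0 : (0 < p)%N := prime_gt0 pp.
have le1 : forall r : R, 0 <= r -> r ^+ p <= 1 -> r <= 1.
  by move=> r r0 hr; rewrite -(ler_pXn2r p0) ?nnegrE // expr1n.
have fle1 : forall y, abs y <= 1 -> f y <= 1.
  move=> y hy; rewrite /f; apply: le_trans (HT _ _) _.
  by rewrite ge_max na_absN // (na_absX _ _ H) exprn_ile1.
have improve : forall y, abs y <= 1 -> exists y', abs y' <= 1 /\ f y' < f y.
  move=> y hy.
  pose d := x - y ^+ p.
  have hd : abs d = f y by apply: fsym.
  have fpos : 0 < f y by apply: le_lt_trans (Hbig y hy); exact: H0.
  have nd : d != 0 by apply/eqP => d0; move: fpos; rewrite -hd d0 abs0 ltxx.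
  have [c [nc hc]] := Hdiv d nd.
  have ncp : c ^+ p != 0 by rewrite expf_neq0.
  pose u := d / c ^+ p.
  have hu : abs u <= 1.
    by rewrite /u HM na_absV // (na_absX _ _ H) hc mulfV // hd (gt_eqF fpos).
  have [w [hw hwu]] := Hperf u hu.
  pose z := c * w.
  have hz : abs z <= 1.
    apply: le1; first exact: H0.
    rewrite -(na_absX _ _ H) /z exprMn HM (na_absX c _ H) hc (na_absX w _ H) hd.
    apply: le_trans (fle1 y hy); apply: ler_piMr; [exact: ltW | exact: exprn_ile1].
  have hzd : abs (z ^+ p - d) < f y.
    have -> : z ^+ p - d = c ^+ p * (w ^+ p - u).
      by rewrite /z /u exprMn mulrBr mulrCA mulfV // mulr1.
    by rewrite HM (na_absX c _ H) hc hd -[X in _ < X]mulr1 ltr_pM2l.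
  exists (y + z); split.
    by apply: le_trans (HT _ _) _; rewrite ge_max hy hz.
  have -> : f (y + z) = abs (((y + z) ^+ p - y ^+ p - z ^+ p) + (z ^+ p - d)).
    rewrite /f /d; congr abs.
    move: ((y + z) ^+ p) (y ^+ p) (z ^+ p) => A B C; ring.
  apply: le_lt_trans (HT _ _) _; rewrite gt_max hzd andbT.
  exact: le_lt_trans (na_binom _ _ _ pp H hy hz) (Hbig y hy).
pose S : set R := fun t => exists y, abs y <= 1 /\ t = f y.
have hinf : has_inf S.
  split; first by exists (f 0); exists 0; rewrite abs0 ler01.
  by exists 0 => t [y [_ ->]]; exact: H0.
pose s := inf S.
have sle : forall y, abs y <= 1 -> s <= f y.
  by move=> y hy; apply: (ge_inf hinf.2); exists y.
have slt : forall y, abs y <= 1 -> s < f y.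
  move=> y hy; have [y' [hy' lt]] := improve y hy.
  exact: le_lt_trans (sle y' hy') lt.
have adh : forall t, exists y, s < t -> abs y <= 1 /\ f y < t.
  move=> t; case: (boolP (s < t)) => st; last by exists 0.
  have ts : 0 < t - s by rewrite subr_gt0.
  have [e [y [hy ->]] lt] := inf_adherent ts hinf.
  exists y => _; split => //; move: lt.
  by rewrite /s addrCA subrr addr0.
pose h t := proj1_sig (cid (adh t)).
have hh : forall t, s < t -> abs (h t) <= 1 /\ f (h t) < t.
  by move=> t st; exact: (proj2_sig (cid (adh t)) st).
pose tt := fix tt (n : nat) : R := match n with
  | 0 => s + 1 | n'.+1 => Num.min (f (h (tt n'))) (s + (n'.+2%:R)^-1) end.
have tts : forall n, s < tt n.
  elim=> [|n IH] /=; first by rewrite ltrDl ltr01.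
  rewrite lt_min; apply/andP; split; first by apply: slt; exact: (hh _ IH).1.
  by rewrite ltrDl invr_gt0 ltr0n.
pose y n := h (tt n).
have hy : forall n, abs (y n) <= 1 /\ f (y n) < tt n by move=> n; exact: hh.
have ttb : forall n, tt n <= s + (n.+1%:R)^-1.
  by case=> [|n] /=; rewrite ?invr1 ?lexx // ge_min lexx orbT.
have ydec : forall n, f (y n.+1) <= f (y n).
  move=> n; apply: ltW; apply: lt_le_trans (hy n.+1).2 _.
  by rewrite /= ge_min lexx.
have rt : forall n, exists r : R, 0 < r /\ r ^+ p = f (y n).
  move=> n; have e0 : y n ^+ p - x != 0.
    apply/eqP => e0; have := Hbig _ (hy n).1; rewrite /f e0 abs0 ltNge.
    by rewrite H0.
  have [c [nc hc]] := Hdiv _ e0; exists (abs c); split => //.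
  by rewrite lt_def H0 andbT; apply/eqP => /H1 /eqP; rewrite (negbTE nc).
pose r n := proj1_sig (cid (rt n)).
have hr : forall n, 0 < r n /\ r n ^+ p = f (y n).
  by move=> n; exact: (proj2_sig (cid (rt n))).
have rle : forall n z, abs z <= 1 -> abs (z - y n) <= r n -> f z <= f (y n).
  move=> n z hz hzn.
  have -> : f z = abs ((z ^+ p - y n ^+ p) + (y n ^+ p - x)) by rewrite /f addrA subrK.
  apply: le_trans (HT _ _) _; rewrite ge_max lexx andbT.
  apply: le_trans (na_powB1 _ _ _ pp H hz (hy n).1) _.
  rewrite ge_max; apply/andP; split; last exact: ltW (Hbig _ (hy n).1).
  by rewrite -(hr n).2 ler_pXn2r // nnegrE ?H0 // ltW // (hr n).1.
have rpos : forall n, 0 <= r n by move=> n; exact: ltW (hr n).1.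
have rmono : forall n, r n.+1 <= r n.
  move=> n; rewrite -(ler_pXn2r p0) ?nnegrE ?rpos //.
  by rewrite !(hr _).2 ydec.
have nest : forall n w, cball abs (y n.+1) (r n.+1) w -> cball abs (y n) (r n) w.
  move=> n w; rewrite /cball => hw.
  apply: le_trans (na_absB _ (y n.+1) _ H) _; rewrite ge_max; apply/andP; split.
    exact: le_trans hw (rmono n).
  rewrite -(ler_pXn2r p0) ?nnegrE ?H0 ?rpos // (hr n).2.
  apply: le_trans (na_powB2 _ _ _ pp H (hy n.+1).1 (hy n).1) _.
  rewrite ge_max (ltW (Hbig _ (hy n).1)) andbT.
  apply: le_trans (na_absB _ x _ H) _.
  by rewrite ge_max fsym ydec lexx.
have [z hz] := Hsc y r (fun n => (hr n).1) nest.
have z1 : abs z <= 1.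
  have hz0 := hz 0; rewrite /cball in hz0.
  rewrite -(subrK (y 0) z); apply: le_trans (HT _ _) _.
  rewrite ge_max (hy 0).1 andbT; apply: le_trans hz0 _.
  apply: le1; first exact: ltW (hr 0).1.
  by rewrite (hr 0).2; apply: fle1 (hy 0).1.
have fz : forall n, f z <= f (y n) by move=> n; apply: rle z1 (hz n).
have := slt z z1; rewrite -subr_gt0 => dpos.
have dinv : 0 <= (f z - s)^-1 by rewrite invr_ge0 ltW.
set k := Num.Def.archi_bound (f z - s)^-1.
have hk := archi_boundP dinv; rewrite -/k in hk.
have hk1 : (k.+1%:R)^-1 < f z - s.
  rewrite invf_plt ?posrE ?ltr0n //; apply: lt_le_trans hk _.
  by rewrite ler_nat.
have := le_lt_trans (fz k) (hy k).2.
move=> /lt_le_trans /(_ (ttb k)) h2.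
have : f z < f z by apply: lt_trans h2 _; rewrite -ltrBrDl.
by rewrite ltxx.
Qed.

Theorem theorem5p5 (p : nat) (K : fieldType) (R : realType) (abs : K -> R) :
  prime p ->
  nonarch_field abs ->
  spherically_complete abs ->
  residue_char abs p ->
  value_group_pdivisible abs p ->
  residue_perfect abs p ->
  perfectoid abs p.
Proof.
move=> pp Hf Hsc Hrc Hdiv Hperf.
have Hf' := Hf; case: Hf => H Hnt Hc.
split => //.
  exact: (nondiscrete p pp Hf' Hdiv).
exact: (frob p pp H Hsc Hdiv Hperf).
Qed.
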